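(* Let $\mathcal I$ be $\mathcal I_\omega$ or $\mathcal I_0$. For every set $\Gamma\subseteq\mathbb T(\Sigma)$ and every $t\in\mathbb T(\Sigma)$: $\Gamma\Vdash_{\mathcal I}t$ if and only if $\Gamma\vdash_{\mathcal I}t$.
   Context: Illative systems. Fix a finite set $\mathcal B$ of base types and a set $\Sigma$ of primitive constants containing $\Xi$, $L$ and $A_\tau$ for each $\tau\in\mathcal B$. $\mathbb T(\Sigma)$ is the set of type-free lambda-terms over $\Sigma$. Abbreviations: $I=\lambda x.x$, $K=\lambda xy.x$, $H=\lambda x.L(Kx)$, $\supset\;=\lambda xy.\Xi(Kx)(Ky)$ (infix, right-associative), $F=\lambda xyf.\Xi x(\lambda z.y(fz))$. Judgements are $\Gamma\vdash t$ with $\Gamma$ finite. $\mathcal I_\omega$ has axioms $\Gamma,t\vdash t$; $\Gamma\vdash LH$; $\Gamma\vdash LA_\tau$ ($\tau\in\mathcal B$); and rules: (Eq) from $\Gamma\vdash t_1$ and $t_1=_{\beta\eta}t_2$ infer $\Gamma\vdash t_2$; ($H_i$) from $\Gamma\vdash t$ infer $\Gamma\vdash Ht$; ($\Xi_e$) from $\Gamma\vdash\Xi t_1t_2$ and $\Gamma\vdash t_1t_3$ infer $\Gamma\vdash t_2t_3$; ($\Xi_i$) from $\Gamma,t_1x\vdash t_2x$ and $\Gamma\vdash Lt_1$ infer $\Gamma\vdash\Xi t_1t_2$; ($\Xi_H$) from $\Gamma,t_1x\vdash H(t_2x)$ and $\Gamma\vdash Lt_1$ infer $\Gamma\vdash H(\Xi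 t_1t_2)$; ($F_L$) from $\Gamma,t_1x\vdash Lt_2$ and $\Gamma\vdash Lt_1$ infer $\Gamma\vdash L(Ft_1t_2)$; in the last three $x\notin FV(\Gamma,t_1,t_2)$. $\mathcal I_0$ is $\mathcal I_\omega$ without $F_L$. For arbitrary $\Gamma$, $\Gamma\vdash_{\mathcal I}t$ means some finite $\Gamma'\subseteq\Gamma$ has $\Gamma'\vdash t$ derivable in $\mathcal I$. A combinatory algebra is $\langle C,\cdot,S,K\rangle$ with $SXYZ=XZ(YZ)$, $KXY=X$; extensional if $M_1X=M_2X$ for all $X$ implies $M_1=M_2$. An illative Kripke pre-model is $\langle\mathcal S,\le,\mathcal C,I,\varsigma\rangle$: $\le$ a partial order on states $\mathcal S$, $\mathcal C$ an extensional combinatory algebra, $I:\Sigma\to\mathcal C$, $\varsigma$ assigns to each element of $\mathcal C$ an upward-closed subset of $\mathcal S$. For a valuation $u$ (variables to $\mathcal C$): $[\![x]\!]_u=u(x)$, $[\![c]\!]_u=I(c)$, $[\![t_1t_2]\!]_u=[\![t_1]\!]_u\cdot[\![t_2]\!]_u$, $[\![\lambda x.t]\!]_u$ the unique $d$ with $d\cdot d'=[\![t]\!]_{u[x/d']}$ for all $d'$. An illative Kripke model for $\mathcal I_\omega$ is a pre-model such that for all $X,Y\in\mathcal C$, $s\in\mathcal S$ (writing $\Xi,L,H,F,A_\tau$ for their values): (1) if $s\in\varsigma(LX)$ and for all $s'\ge s$, $Z\in\mathcal C$ with $s'\in\varsigma(XZ)$ we have $s'\in\varsigma(YZ)$, then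 $s\in\varsigma(\Xi XY)$; (2) if $s\in\varsigma(\Xi XY)$ then for all $Z$ with $s\in\varsigma(XZ)$, $s\in\varsigma(YZ)$; (3) if $s\in\varsigma(LX)$ and for all $s'\ge s$, $Z$ with $s'\in\varsigma(XZ)$ we have $s'\in\varsigma(H(YZ))$, then $s\in\varsigma(H(\Xi XY))$; (4) if $s\in\varsigma(LX)$ and for all $s'\ge s$ such that $s'\in\varsigma(XZ)$ for some $Z$ we have $s'\in\varsigma(LY)$, then $s\in\varsigma(L(FXY))$; (5) $s\in\varsigma(X)$ implies $s\in\varsigma(HX)$; (6) $s\in\varsigma(LH)$; (7) $s\in\varsigma(LA_\tau)$ for $\tau\in\mathcal B$. For $\mathcal I_0$ omit (4). Write $s,u\Vdash_{\mathcal M}t$ iff $s\in\varsigma([\![t]\!]_u)$. $\Gamma\Vdash_{\mathcal I}t$ means: for every illative Kripke model $\mathcal M$ for $\mathcal I$, state $s$ and valuation $u$ with $s,u\Vdash_{\mathcal M}t'$ for all $t'\in\Gamma$, we have $s,u\Vdash_{\mathcal M}t$. *)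

(* Defs.v *)
From Stdlib Require Import List Relations ClassicalEpsilon FinFun.

Set Implicit Arguments.

Definition scons {A : Type} (d : A) (u : nat -> A) : nat -> A :=
  fun n => match n with 0 => d | S n => u n end.

Section Illative.

(* B : the set of base types; Oth : the primitive constants of Sigma other
   than Xi, L and the A_tau. *)
Variables (B Oth : Type).

Inductive const : Type :=
| CXi : const
| CL : const
| CA : B -> const
| COther : Oth -> const.

(* Type-free lambda terms over Sigma, de Bruijn indices.  Free variables are
   the indices that are not bound. *)
Inductive term : Type :=
| Var : nat -> term
| Cst : const -> term
| App : term -> term -> term
| Lam : term -> term.

Definition upren (r : nat -> nat) : nat -> nat :=
  fun n => match n with 0 => 0 | S n => S (r n) end.

Fixpoint ren (r : nat -> nat) (t : term) : term :=
  match t with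
  | Var n => Var (r n)
  | Cst c => Cst c
  | App t1 t2 => App (ren r t1) (ren r t2)
  | Lam t => Lam (ren (upren r) t)
  end.

Definition up (s : nat -> term) : nat -> term :=
  fun n => match n with 0 => Var 0 | S n => ren S (s n) end.

Fixpoint sub (s : nat -> term) (t : term) : term :=
  match t with
  | Var n => s n
  | Cst c => Cst c
  | App t1 t2 => App (sub s t1) (sub s t2)
  | Lam t => Lam (sub (up s) t)
  end.

Inductive step : term -> term -> Prop :=
| step_beta t s : step (App (Lam t) s) (sub (scons s Var) t)
| step_eta t : step (Lam (App (ren S t) (Var 0))) t
| step_app1 t1 t1' t2 : step t1 t1' -> step (App t1 t2) (App t1' t2)
| step_app2 t1 t2 t2' : step t2 t2' -> step (App t1 t2) (App t1 t2')
| step_lam t t' : step t t' -> step (Lam t) (Lam t').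

Definition beq : term -> term -> Prop := clos_refl_sym_trans term step.

Fixpoint occurs (x : nat) (t : term) : Prop :=
  match t with
  | Var n => n = x
  | Cst _ => False
  | App t1 t2 => occurs x t1 \/ occurs x t2
  | Lam t => occurs (S x) t
  end.

Definition tXi : term := Cst CXi.
Definition tL : term := Cst CL.
Definition tA (tau : B) : term := Cst (CA tau).
Definition tI : term := Lam (Var 0).
Definition tK : term := Lam (Lam (Var 1)).
Definition tH : term := Lam (App tL (App tK (Var 0))).
Definition tImp : term :=
  Lam (Lam (App (App tXi (App tK (Var 1))) (App tK (Var 0)))).
Definition tF : term :=
  Lam (Lam (Lam (App (App tXi (Var 2))
                      (Lam (App (Var 2) (App (Var 1) (Var 0))))))).

(* Derivability in I_omega (omega = true) or I_0 (omega = false);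
   finite contexts are lists. *)
Inductive deriv (omega : bool) : list term -> term -> Prop :=
| d_ax G t : In t G -> deriv omega G t
| d_LH G : deriv omega G (App tL tH)
| d_LA G tau : deriv omega G (App tL (tA tau))
| d_Eq G t1 t2 : deriv omega G t1 -> beq t1 t2 -> deriv omega G t2
| d_Hi G t : deriv omega G t -> deriv omega G (App tH t)
| d_Xie G t1 t2 t3 :
    deriv omega G (App (App tXi t1) t2) -> deriv omega G (App t1 t3) ->
    deriv omega G (App t2 t3)
| d_Xii G t1 t2 x :
    (forall t, In t G -> ~ occurs x t) -> ~ occurs x t1 -> ~ occurs x t2 ->
    deriv omega (App t1 (Var x) :: G) (App t2 (Var x)) ->
    deriv omega G (App tL t1) ->
    deriv omega G (App (App tXi t1) t2)
| d_XiH G t1 t2 x :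
    (forall t, In t G -> ~ occurs x t) -> ~ occurs x t1 -> ~ occurs x t2 ->
    deriv omega (App t1 (Var x) :: G) (App tH (App t2 (Var x))) ->
    deriv omega G (App tL t1) ->
    deriv omega G (App tH (App (App tXi t1) t2))
| d_FL G t1 t2 x :
    omega = true ->
    (forall t, In t G -> ~ occurs x t) -> ~ occurs x t1 -> ~ occurs x t2 ->
    deriv omega (App t1 (Var x) :: G) (App tL t2) ->
    deriv omega G (App tL t1) ->
    deriv omega G (App tL (App (App tF t1) t2)).

Definition prov (omega : bool) (Gamma : term -> Prop) (t : term) : Prop :=
  exists G : list term, (forall t', In t' G -> Gamma t') /\ deriv omega G t.

Record comb_alg : Type := {
  ca_car :> Type;
  ca_app : ca_car -> ca_car -> ca_car;
  ca_S : ca_car;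
  ca_K : ca_car;
  ca_Sax : forall X Y Z,
    ca_app (ca_app (ca_app ca_S X) Y) Z = ca_app (ca_app X Z) (ca_app Y Z);
  ca_Kax : forall X Y, ca_app (ca_app ca_K X) Y = X
}.

Definition extensional (C : comb_alg) : Prop :=
  forall M1 M2 : C, (forall X : C, ca_app C M1 X = ca_app C M2 X) -> M1 = M2.

Record premodel : Type := {
  pm_state : Type;
  pm_le : pm_state -> pm_state -> Prop;
  pm_le_refl : forall s, pm_le s s;
  pm_le_trans : forall s1 s2 s3, pm_le s1 s2 -> pm_le s2 s3 -> pm_le s1 s3;
  pm_le_antisym : forall s1 s2, pm_le s1 s2 -> pm_le s2 s1 -> s1 = s2;
  pm_alg : comb_alg;
  pm_ext : extensional pm_alg;
  pm_I : const -> pm_alg;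
  pm_vs : pm_alg -> pm_state -> Prop;
  pm_vs_up : forall X s s', pm_le s s' -> pm_vs X s -> pm_vs X s'
}.

Section Sem.
Variable M : premodel.
Local Notation C := (pm_alg M).
Local Notation "a · b" := (ca_app C a b) (at level 40, left associativity).

(* [[t]]_u ; for lambda: the (unique, by extensionality) d with
   d . d' = [[t]]_{u[x/d']} for all d' *)
Fixpoint den (t : term) (u : nat -> C) {struct t} : C :=
  match t with
  | Var n => u n
  | Cst c => pm_I M c
  | App t1 t2 => den t1 u · den t2 u
  | Lam t0 =>
      epsilon (inhabits (ca_K C))
        (fun d => forall d' : C, d · d' = den t0 (scons d' u))
  end.

(* values of the closed abbreviations (independent of the valuation) *)
Definition u0 : nat -> C := fun _ => ca_K C.
Definition vXi : C := pm_I M CXi.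
Definition vL : C := pm_I M CL.
Definition vA (tau : B) : C := pm_I M (CA tau).
Definition vH : C := den tH u0.
Definition vF : C := den tF u0.

Definition vs (X : C) (s : pm_state M) : Prop := pm_vs M X s.

Definition is_model (omega : bool) : Prop :=
  (forall (X Y : C) s, vs (vL · X) s ->
     (forall s', pm_le M s s' -> forall Z, vs (X · Z) s' -> vs (Y · Z) s') ->
     vs (vXi · X · Y) s) /\
  (forall (X Y : C) s, vs (vXi · X · Y) s ->
     forall Z, vs (X · Z) s -> vs (Y · Z) s) /\
  (forall (X Y : C) s, vs (vL · X) s ->
     (forall s', pm_le M s s' -> forall Z, vs (X · Z) s' -> vs (vH · (Y · Z)) s') ->
     vs (vH · (vXi · X · Y)) s) /\
  (omega = true ->
   forall (X Y : C) s, vs (vL · X) s ->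
     (forall s', pm_le M s s' -> (exists Z, vs (X · Z) s') -> vs (vL · Y) s') ->
     vs (vL · (vF · X · Y)) s) /\
  (forall (X : C) s, vs X s -> vs (vH · X) s) /\
  (forall s, vs (vL · vH) s) /\
  (forall s tau, vs (vL · vA tau) s).

Definition forces (s : pm_state M) (u : nat -> C) (t : term) : Prop :=
  vs (den t u) s.

End Sem.

Definition sem_conseq (omega : bool) (Gamma : term -> Prop) (t : term) : Prop :=
  forall M : premodel, is_model M omega ->
  forall (s : pm_state M) (u : nat -> pm_alg M),
    (forall t', Gamma t' -> forces M s u t') -> forces M s u t.

End Illative.

(* Main.v *)
Require Import Defs.
From Stdlib Require Import List Relations ClassicalEpsilon FinFun Lia Arith.
From Stdlib Require Import FunctionalExtensionality PropExtensionality ProofIrrelevance.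
Set Implicit Arguments.
Arguments Var {B Oth} _.
Arguments tXi {B Oth}.
Arguments tL {B Oth}.
Arguments tH {B Oth}.
Arguments tK {B Oth}.
Arguments tF {B Oth}.
Arguments tI {B Oth}.

Section Syn.
Variables B Oth : Type.
Notation term := (term B Oth).

Lemma ren_ext (r1 r2 : nat -> nat) (t : term) :
  (forall n, r1 n = r2 n) -> ren r1 t = ren r2 t.
Proof.
  revert r1 r2; induction t; intros r1 r2 H; simpl; f_equal; auto.
  apply IHt. intros [|n]; simpl; auto.
Qed.

Lemma sub_occ (s1 s2 : nat -> term) (t : term) :
  (forall n, occurs n t -> s1 n = s2 n) -> sub s1 t = sub s2 t.
Proof.
  revert s1 s2; induction t; intros s1 s2 H; simpl in *; f_equal; auto.
  apply IHt. intros [|n] Hn; simpl; auto. f_equal. apply H. exact Hn.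
Qed.

Lemma sub_ext (s1 s2 : nat -> term) (t : term) :
  (forall n, s1 n = s2 n) -> sub s1 t = sub s2 t.
Proof. intros H; apply sub_occ; auto. Qed.

Lemma ren_ren r1 r2 (t : term) : ren r1 (ren r2 t) = ren (fun n => r1 (r2 n)) t.
Proof.
  revert r1 r2; induction t; intros; simpl; f_equal; auto.
  rewrite IHt. apply ren_ext. intros [|n]; reflexivity.
Qed.

Lemma ren_as_sub r (t : term) : ren r t = sub (fun n => Var (r n)) t.
Proof.
  revert r; induction t; intros; simpl; f_equal; auto.
  rewrite IHt. apply sub_ext. intros [|n]; reflexivity.
Qed.

Lemma sub_ren s r (t : term) : sub s (ren r t) = sub (fun n => s (r n)) t.
Proof.
  revert s r; induction t; intros; simpl; f_equal; auto.
  rewrite IHt. apply sub_ext. intros [|n]; reflexivity.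
Qed.

Lemma ren_sub r s (t : term) : ren r (sub s t) = sub (fun n => ren r (s n)) t.
Proof.
  revert s r; induction t; intros; simpl; f_equal; auto.
  rewrite IHt. apply sub_ext. intros [|n]; simpl; auto.
  rewrite !ren_ren. apply ren_ext. reflexivity.
Qed.

Lemma sub_sub s1 s2 (t : term) : sub s1 (sub s2 t) = sub (fun n => sub s1 (s2 n)) t.
Proof.
  revert s1 s2; induction t; intros; simpl; f_equal; auto.
  rewrite IHt. apply sub_ext. intros [|n]; simpl; auto.
  rewrite sub_ren, ren_sub. apply sub_ext. reflexivity.
Qed.

Lemma sub_id (t : term) : sub (@Var B Oth) t = t.
Proof.
  induction t; simpl; f_equal; auto.
  rewrite <- IHt at 2. apply sub_ext. intros [|n]; reflexivity.
Qed.

Lemma step_sub s (t t' : term) : step t t' -> step (sub s t) (sub s t').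
Proof.
  intros H; revert s; induction H; intros; simpl.
  - replace (sub s0 (sub (scons s Var) t)) with
       (sub (scons (sub s0 s) Var) (sub (up s0) t)).
    + constructor.
    + rewrite !sub_sub. apply sub_ext. intros [|n]; simpl; auto.
      rewrite sub_ren. apply sub_id.
  - replace (sub (up s) (ren S t)) with (ren S (sub s t)).
    + constructor.
    + rewrite sub_ren, ren_sub. apply sub_ext. reflexivity.
  - constructor; auto.
  - constructor; auto.
  - constructor; auto.
Qed.

Lemma beq_map (f : term -> term) :
  (forall a b, step a b -> step (f a) (f b)) ->
  forall a b, beq a b -> beq (f a) (f b).
Proof.
  intros Hf a b H; induction H.
  - apply rst_step; auto.
  - apply rst_refl.
  - apply rst_sym; auto.
  - eapply rst_trans; eauto.
Qed.

Lemma beq_refl (a : term) : beq a a. Proof. apply rst_refl. Qed.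
Lemma beq_sym (a b : term) : beq a b -> beq b a. Proof. apply rst_sym. Qed.
Lemma beq_trans (a b c : term) : beq a b -> beq b c -> beq a c.
Proof. apply rst_trans. Qed.
Lemma beq_step (a b : term) : step a b -> beq a b. Proof. apply rst_step. Qed.

Lemma beq_sub s (a b : term) : beq a b -> beq (sub s a) (sub s b).
Proof. apply beq_map. intros; apply step_sub; auto. Qed.

Lemma beq_app (a a' b b' : term) : beq a a' -> beq b b' -> beq (App a b) (App a' b').
Proof.
  intros H1 H2. apply beq_trans with (App a' b).
  - apply (beq_map (fun x => App x b)); auto. intros; constructor; auto.
  - apply (beq_map (fun x => App a' x)); auto. intros; constructor; auto.
Qed.

Lemma beq_lam (a b : term) : beq a b -> beq (Lam a) (Lam b).
Proof. apply beq_map. intros; constructor; auto. Qed.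

Fixpoint bound (t : term) : nat :=
  match t with
  | Var n => S n
  | Cst _ => 0
  | App a b => max (bound a) (bound b)
  | Lam a => pred (bound a)
  end.

Lemma occurs_bound n (t : term) : occurs n t -> n < bound t.
Proof.
  revert n; induction t; simpl; intros m H.
  - lia.
  - destruct H.
  - destruct H as [H|H]; [apply IHt1 in H|apply IHt2 in H]; lia.
  - apply IHt in H. lia.
Qed.

Fixpoint lbound (l : list term) : nat :=
  match l with nil => 0 | t :: l => max (bound t) (lbound l) end.

Lemma lbound_ge l t : In t l -> bound t <= lbound l.
Proof. induction l; simpl; intros H; [destruct H|destruct H; subst]; auto; try lia.
  specialize (IHl H); lia. Qed.

Lemma fresh_gen (l : list term) n : lbound l <= n -> forall t, In t l -> ~ occurs n t.
Proof. intros H t Ht Ho. apply occurs_bound in Ho. apply lbound_ge in Ht. lia. Qed.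

Lemma occurs_ren r v (t : term) : occurs v (ren r t) -> exists n, occurs n t /\ v = r n.
Proof.
  revert r v; induction t; simpl; intros r v H.
  - eauto.
  - destruct H.
  - destruct H as [H|H]; [destruct (IHt1 _ _ H) as [n [? ?]]|destruct (IHt2 _ _ H) as [n [? ?]]]; eauto.
  - destruct (IHt _ _ H) as [[|n] [H1 H2]]; simpl in H2; [discriminate|].
    injection H2; intros; subst; eauto.
Qed.

End Syn.


Section Der.
Variables B Oth : Type.
Notation term := (term B Oth).

Definition updt (s : nat -> term) x y : nat -> term :=
  fun n => if Nat.eqb n x then Var y else s n.

Lemma sub_updt s x y (t : term) : ~ occurs x t -> sub (updt s x y) t = sub s t.
Proof.
  intros H. apply sub_occ. intros n Hn. unfold updt.
  destruct (Nat.eqb_spec n x); subst; tauto.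
Qed.

Lemma updt_eq s x y : updt s x y x = Var y.
Proof. unfold updt. rewrite Nat.eqb_refl. reflexivity. Qed.

Lemma fresh3 (l : list term) (a b : term) :
  exists y, (forall t, In t l -> ~ occurs y t) /\ ~ occurs y a /\ ~ occurs y b.
Proof.
  exists (lbound (a :: b :: l)). pose proof (@fresh_gen B Oth (a :: b :: l) _ (le_n _)) as H.
  split; [|split]; intros; apply H; simpl; auto.
Qed.

Lemma deriv_sub om G (t : term) : deriv om G t ->
  forall s G', (forall t', In t' G -> In (sub s t') G') -> deriv om G' (sub s t).
Proof.
  induction 1; intros s G' HG; simpl.
  - apply d_ax; auto.
  - apply d_LH.
  - apply d_LA.
  - apply d_Eq with (sub s t1); auto. apply beq_sub; auto.
  - apply d_Hi. apply IHderiv; auto.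
  - eapply d_Xie; [apply (IHderiv1 s G' HG)|apply (IHderiv2 s G' HG)].
  - destruct (fresh3 G' (sub s t1) (sub s t2)) as [y [Hy1 [Hy2 Hy3]]].
    apply d_Xii with y; auto.
    + specialize (IHderiv1 (updt s x y) (App (sub s t1) (Var y) :: G')).
      simpl in IHderiv1. rewrite !sub_updt in IHderiv1 by auto.
      rewrite ?updt_eq in IHderiv1.
      apply IHderiv1. intros t' [Ht|Ht]; subst; simpl.
      * left. rewrite sub_updt by auto. rewrite updt_eq. auto.
      * right. rewrite sub_updt by auto. auto.
    + apply (IHderiv2 s G' HG).
  - destruct (fresh3 G' (sub s t1) (sub s t2)) as [y [Hy1 [Hy2 Hy3]]].
    apply d_XiH with y; auto.
    + specialize (IHderiv1 (updt s x y) (App (sub s t1) (Var y) :: G')).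
      simpl in IHderiv1. rewrite !sub_updt in IHderiv1 by auto.
      rewrite ?updt_eq in IHderiv1.
      apply IHderiv1. intros t' [Ht|Ht]; subst; simpl.
      * left. rewrite sub_updt by auto. rewrite updt_eq. auto.
      * right. rewrite sub_updt by auto. auto.
    + apply (IHderiv2 s G' HG).
  - destruct (fresh3 G' (sub s t1) (sub s t2)) as [y [Hy1 [Hy2 Hy3]]].
    apply d_FL with y; auto.
    + specialize (IHderiv1 (updt s x y) (App (sub s t1) (Var y) :: G')).
      simpl in IHderiv1. rewrite !sub_updt in IHderiv1 by auto.
      apply IHderiv1. intros t' [Ht|Ht]; subst; simpl.
      * left. rewrite sub_updt by auto. rewrite updt_eq. auto.
      * right. rewrite sub_updt by auto. auto.
    + apply (IHderiv2 s G' HG).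
Qed.

Lemma deriv_weak om G (t : term) G' : deriv om G t -> incl G G' -> deriv om G' t.
Proof.
  intros H Hi. rewrite <- (sub_id t). apply (deriv_sub H).
  intros t' Ht'. rewrite sub_id. auto.
Qed.

End Der.


Section Sem.
Variables B Oth : Type.
Notation term := (term B Oth).
Variable M : premodel B Oth.
Notation C := (pm_alg M).
Notation "a · b" := (ca_app C a b) (at level 40, left associativity).

Inductive cterm := CV (n : nat) | CC (c : C) | CAp (a b : cterm).

Fixpoint ceval (c : cterm) (u : nat -> C) : C :=
  match c with
  | CV n => u n
  | CC c => c
  | CAp a b => ceval a u · ceval b u
  end.

Fixpoint abs0 (c : cterm) : cterm :=
  match c with
  | CV 0 => CAp (CAp (CC (ca_S C)) (CC (ca_K C))) (CC (ca_K C))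
  | CV (S n) => CAp (CC (ca_K C)) (CV n)
  | CC c => CAp (CC (ca_K C)) (CC c)
  | CAp a b => CAp (CAp (CC (ca_S C)) (abs0 a)) (abs0 b)
  end.

Lemma abs0_spec c u d : ceval (abs0 c) u · d = ceval c (scons d u).
Proof.
  induction c as [[|n]|c|a IHa b IHb]; simpl.
  - rewrite ca_Sax, !ca_Kax. reflexivity.
  - apply ca_Kax.
  - apply ca_Kax.
  - rewrite ca_Sax, IHa, IHb. reflexivity.
Qed.

Fixpoint trans (t : term) : cterm :=
  match t with
  | Var n => CV n
  | Cst c => CC (pm_I M c)
  | App a b => CAp (trans a) (trans b)
  | Lam a => abs0 (trans a)
  end.

Lemma den_trans (t : term) u : den M t u = ceval (trans t) u.
Proof.
  revert u; induction t; intros u; simpl; try reflexivity.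
  - rewrite IHt1, IHt2; reflexivity.
  - match goal with |- epsilon ?i ?P = _ => 
      assert (HP : P (ceval (abs0 (trans t)) u)) by
        (intros d; rewrite abs0_spec, IHt; reflexivity);
      pose proof (epsilon_spec i P (ex_intro _ _ HP)) as HE end.
    apply (pm_ext M). intros d. rewrite HE, HP. reflexivity.
Qed.

Lemma den_lam (t : term) u d : den M (Lam t) u · d = den M t (scons d u).
Proof.
  rewrite !den_trans. simpl. apply abs0_spec.
Qed.

Lemma den_lam_ext (t : term) u e :
  (forall d, e · d = den M t (scons d u)) -> den M (Lam t) u = e.
Proof. intros H. apply (pm_ext M). intros d. rewrite den_lam, H. reflexivity. Qed.

Lemma den_occ (t : term) u v : (forall n, occurs n t -> u n = v n) -> den M t u = den M t v.
Proof.
  revert u v; induction t; intros u v H; try (simpl in *; auto; fail).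
  - simpl in *. rewrite (IHt1 u v), (IHt2 u v); auto.
  - simpl in H. apply den_lam_ext. intros d. rewrite den_lam. apply IHt.
    intros [|n] Hn; simpl; auto. symmetry. apply H. exact Hn.
Qed.

Lemma den_ext (t : term) u v : (forall n, u n = v n) -> den M t u = den M t v.
Proof. intros; apply den_occ; auto. Qed.

Lemma den_ren r (t : term) u : den M (ren r t) u = den M t (fun n => u (r n)).
Proof.
  revert r u; induction t; intros r u; try (simpl; auto; fail).
  - simpl. rewrite IHt1, IHt2; auto.
  - change (ren r (Lam t)) with (Lam (ren (upren r) t)). apply den_lam_ext. intros d. rewrite den_lam, IHt. apply den_ext.
    intros [|n]; reflexivity.
Qed.

Lemma den_sub s (t : term) u : den M (sub s t) u = den M t (fun n => den M (s n) u).
Proof.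
  revert s u; induction t; intros s u; try (simpl; auto; fail).
  - simpl. rewrite IHt1, IHt2; auto.
  - change (sub s (Lam t)) with (Lam (sub (up s) t)). apply den_lam_ext. intros d. rewrite den_lam, IHt. apply den_ext.
    intros [|n]; simpl; auto. rewrite den_ren. reflexivity.
Qed.

Lemma den_step (t t' : term) : step t t' -> forall u, den M t u = den M t' u.
Proof.
  induction 1; intros u.
  - change (den M (App (Lam t) s) u) with (den M (Lam t) u · den M s u).
    rewrite den_lam, den_sub. apply den_ext. intros [|n]; reflexivity.
  - apply den_lam_ext. intros d. simpl. rewrite den_ren. reflexivity.
  - simpl. rewrite IHstep; auto.
  - simpl. rewrite IHstep; auto.
  - apply den_lam_ext. intros d. rewrite den_lam. auto.
Qed.

Lemma den_beq (t t' : term) : beq t t' -> forall u, den M t u = den M t' u.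
Proof.
  induction 1 as [a b H|a|a b H IH|a b c H1 IH1 H2 IH2]; intros u; auto.
  - apply den_step; auto.
  - rewrite IH1; auto.
Qed.

End Sem.


Section Sound.
Variables B Oth : Type.
Notation term := (term B Oth).
Variable M : premodel B Oth.
Notation C := (pm_alg M).
Notation "a · b" := (ca_app C a b) (at level 40, left associativity).

Lemma den_tH u : den M tH u = vH M.
Proof. apply den_occ. intros n Hn. simpl in Hn. lia. Qed.
Lemma den_tF u : den M tF u = vF M.
Proof. apply den_occ. intros n Hn. simpl in Hn. lia. Qed.

Definition updv (u : nat -> C) x Z : nat -> C := fun n => if Nat.eqb n x then Z else u n.

Lemma den_updv u x Z (t : term) : ~ occurs x t -> den M t (updv u x Z) = den M t u.
Proof.
  intros H. apply den_occ. intros n Hn. unfold updv.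
  destruct (Nat.eqb_spec n x); subst; tauto.
Qed.

Lemma updv_eq u x Z : updv u x Z x = Z.
Proof. unfold updv. rewrite Nat.eqb_refl. reflexivity. Qed.

Lemma soundness om G (t : term) : deriv om G t -> is_model M om ->
  forall s u, (forall t', In t' G -> forces M s u t') -> forces M s u t.
Proof.
  intros D HM. destruct HM as [H1 [H2 [H3 [H4 [H5 [H6 H7]]]]]].
  induction D; intros s u HG; unfold forces in *.
  - auto.
  - change (vs M (vL M · den M tH u) s). rewrite den_tH. apply H6.
  - apply H7.
  - rewrite <- (den_beq M H). auto.
  - change (vs M (den M tH u · den M t u) s). rewrite den_tH. apply H5. auto.
  - change (vs M (den M t2 u · den M t3 u) s).
    apply (H2 (den M t1 u)); [apply IHD1|apply IHD2]; auto.
  - change (vs M (vXi M · den M t1 u · den M t2 u) s).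
    apply H1; [apply IHD2; auto|].
    intros s' Hs' Z HZ.
    specialize (IHD1 s' (updv u x Z)). simpl in IHD1.
    rewrite updv_eq, !den_updv in IHD1 by auto. apply IHD1.
    intros t' [Ht'|Ht']; subst.
    + simpl. rewrite updv_eq, den_updv by auto. auto.
    + rewrite den_updv by auto. apply (pm_vs_up M _ s s'); [exact Hs'|exact (HG t' Ht')].
  - change (vs M (den M tH u · (vXi M · den M t1 u · den M t2 u)) s).
    rewrite den_tH.
    apply H3; [apply IHD2; auto|].
    intros s' Hs' Z HZ.
    specialize (IHD1 s' (updv u x Z)).
    replace (vH M · (den M t2 u · Z)) with (den M (App tH (App t2 (Var x))) (updv u x Z)).
    2:{ change (den M (App tH (App t2 (Var x))) (updv u x Z)) with
         (den M tH (updv u x Z) · (den M t2 (updv u x Z) · updv u x Z x)).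
        rewrite den_tH, updv_eq, den_updv by auto. reflexivity. }
    apply IHD1.
    intros t' [Ht'|Ht']; subst.
    + simpl. rewrite updv_eq, den_updv by auto. auto.
    + rewrite den_updv by auto. apply (pm_vs_up M _ s s'); [exact Hs'|exact (HG t' Ht')].
  - change (vs M (vL M · (den M tF u · den M t1 u · den M t2 u)) s).
    rewrite den_tF.
    apply H4; auto; [apply IHD2; auto|].
    intros s' Hs' [Z HZ].
    specialize (IHD1 s' (updv u x Z)). simpl in IHD1.
    rewrite !den_updv in IHD1 by auto. apply IHD1.
    intros t' [Ht'|Ht']; subst.
    + simpl. rewrite updv_eq, den_updv by auto. auto.
    + rewrite den_updv by auto. apply (pm_vs_up M _ s s'); [exact Hs'|exact (HG t' Ht')].
Qed.

End Sound.


Section Quot.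
Variables B Oth : Type.
Notation term := (term B Oth).

Definition Q := {P : term -> Prop | exists t, P = beq t}.
Definition rep (P : Q) : term :=
  proj1_sig (constructive_indefinite_description _ (proj2_sig P)).
Lemma rep_spec P : proj1_sig P = beq (rep P).
Proof. unfold rep. destruct (constructive_indefinite_description _ _). simpl. auto. Qed.
Definition cls (t : term) : Q := exist _ (beq t) (ex_intro _ t eq_refl).

Lemma qeq (P1 P2 : Q) : proj1_sig P1 = proj1_sig P2 -> P1 = P2.
Proof. apply eq_sig_hprop. intros; apply proof_irrelevance. Qed.

Lemma cls_rep P : cls (rep P) = P.
Proof. apply qeq. rewrite (rep_spec P). reflexivity. Qed.

Lemma cls_surj P : exists t, P = cls t.
Proof. exists (rep P). symmetry; apply cls_rep. Qed.

Lemma cls_eq a b : beq a b -> cls a = cls b.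
Proof.
  intros H. apply qeq. simpl.
  apply functional_extensionality. intros x. apply propositional_extensionality.
  split; intros H'.
  - apply beq_trans with a; auto. apply beq_sym; auto.
  - apply beq_trans with b; auto.
Qed.

Lemma cls_inj a b : cls a = cls b -> beq a b.
Proof.
  intros H. assert (E : beq a = beq b) by (apply (f_equal (@proj1_sig _ _)) in H; exact H).
  rewrite E. apply beq_refl.
Qed.

Lemma rep_cls t : beq (rep (cls t)) t.
Proof. apply cls_inj. rewrite cls_rep. reflexivity. Qed.

Definition qapp (P1 P2 : Q) : Q := cls (App (rep P1) (rep P2)).

Lemma qapp_cls a b : qapp (cls a) (cls b) = cls (App a b).
Proof. apply cls_eq. apply beq_app; apply rep_cls. Qed.

Definition tS : term := Lam (Lam (Lam (App (App (Var 2) (Var 0)) (App (Var 1) (Var 0))))).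

Lemma beta (t s : term) : beq (App (Lam t) s) (sub (scons s Var) t).
Proof. apply beq_step. constructor. Qed.

Lemma qSax X Y Z : qapp (qapp (qapp (cls tS) X) Y) Z = qapp (qapp X Z) (qapp Y Z).
Proof.
  destruct (cls_surj X) as [x ->]. destruct (cls_surj Y) as [y ->].
  destruct (cls_surj Z) as [z ->]. rewrite !qapp_cls. apply cls_eq.
  eapply beq_trans.
  { apply beq_app; [|apply beq_refl]. apply beq_app; [|apply beq_refl]. apply beta. }
  simpl. eapply beq_trans.
  { apply beq_app; [|apply beq_refl]. apply beta. }
  simpl. eapply beq_trans; [apply beta|]. simpl.
  rewrite !sub_ren, !sub_id. rewrite sub_sub.
  replace (sub _ x) with x. 
  - apply beq_refl.
  - rewrite <- (sub_id x) at 1. apply sub_ext. intros n. simpl. reflexivity.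
Qed.

Lemma qKax X Y : qapp (qapp (cls tK) X) Y = X.
Proof.
  destruct (cls_surj X) as [x ->]. destruct (cls_surj Y) as [y ->].
  rewrite !qapp_cls. apply cls_eq.
  eapply beq_trans.
  { apply beq_app; [|apply beq_refl]. apply beta. }
  simpl. eapply beq_trans; [apply beta|]. simpl.
  rewrite sub_ren, sub_id. apply beq_refl.
Qed.

Definition QCA : comb_alg := {| ca_car := Q; ca_app := qapp; ca_S := cls tS; ca_K := cls tK;
  ca_Sax := qSax; ca_Kax := qKax |}.

Lemma QCA_ext : extensional QCA.
Proof.
  intros M1 M2 H. destruct (cls_surj M1) as [m1 ->]. destruct (cls_surj M2) as [m2 ->].
  destruct (fresh3 nil m1 m2) as [v [_ [H1 H2]]].
  specialize (H (cls (Var v))). simpl in H. rewrite !qapp_cls in H.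
  apply cls_inj in H. apply cls_eq.
  set (sg := fun n => if Nat.eqb n v then @Var B Oth 0 else Var (S n)).
  apply (beq_sub sg) in H. apply beq_lam in H. simpl in H.
  assert (E : forall m, ~ occurs v m -> sub sg m = ren S m).
  { intros m Hm. rewrite ren_as_sub. apply sub_occ. intros n Hn. unfold sg.
    destruct (Nat.eqb_spec n v); subst; tauto. }
  rewrite !E in H by auto. unfold sg in H. rewrite Nat.eqb_refl in H.
  eapply beq_trans; [apply beq_sym; apply beq_step; apply step_eta|].
  eapply beq_trans; [apply H|]. apply beq_step; apply step_eta.
Qed.

End Quot.


Section Can.
Variables B Oth : Type.
Notation term := (term B Oth).
Variable om : bool.
Variable Gam : term -> Prop.

Definition dbl (n : nat) := n + n.
Definition Gs (t : term) : Prop := exists t0, Gam t0 /\ t = ren dbl t0.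

Record st := mkst { sP : term -> Prop;
  sH : exists l : list term, forall t, sP t <-> Gs t \/ In t l }.

Definition sle (s1 s2 : st) : Prop := forall t, sP s1 t -> sP s2 t.

Lemma sle_antisym s1 s2 : sle s1 s2 -> sle s2 s1 -> s1 = s2.
Proof.
  destruct s1 as [P1 H1], s2 as [P2 H2]; unfold sle; simpl; intros Ha Hb.
  assert (P1 = P2).
  { apply functional_extensionality; intros x; apply propositional_extensionality; split; auto. }
  subst P2. f_equal. apply proof_irrelevance.
Qed.

Definition provS (D : term -> Prop) (t : term) : Prop :=
  exists G, (forall t', In t' G -> D t') /\ deriv om G t.

Definition qvs (P : Q B Oth) (s : st) : Prop := provS (sP s) (rep P).

Lemma qvs_cls t s : qvs (cls t) s <-> provS (sP s) t.
Proof.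
  unfold qvs. split; intros [G [H1 H2]]; exists G; split; auto;
   eapply d_Eq; eauto; [|apply beq_sym]; apply rep_cls.
Qed.

Lemma qvs_up X s s' : sle s s' -> qvs X s -> qvs X s'.
Proof. intros H [G [H1 H2]]. exists G; split; auto. Qed.

Definition Mc : premodel B Oth :=
  @Build_premodel B Oth st sle (fun s t H => H) (fun s1 s2 s3 H1 H2 t H => H2 t (H1 t H))
    sle_antisym (QCA B Oth) (@QCA_ext B Oth) (fun c => cls (Cst c)) qvs qvs_up.

Lemma den_can (t : term) (u : nat -> pm_alg Mc) sg :
  (forall n, u n = cls (sg n)) -> den Mc t u = cls (sub sg t).
Proof.
  revert u sg; induction t; intros u sg Hu.
  - simpl; auto.
  - reflexivity.
  - simpl. rewrite (IHt1 u sg), (IHt2 u sg) by auto. apply qapp_cls.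
  - apply den_lam_ext. intros d. destruct (cls_surj d) as [r ->].
    simpl. rewrite qapp_cls.
    rewrite (IHt _ (scons r sg)).
    + apply cls_eq. eapply beq_trans; [apply beta|]. rewrite sub_sub.
      match goal with |- beq ?a ?b => replace b with a; [apply beq_refl|] end. apply sub_ext. intros [|n]; simpl; auto.
      rewrite sub_ren, sub_id. reflexivity.
    + intros [|n]; simpl; auto.
Qed.


Lemma vH_can : vH Mc = cls tH.
Proof. unfold vH. rewrite (den_can tH (u0 Mc) (fun _ => tK)); reflexivity. Qed.
Lemma vF_can : vF Mc = cls tF.
Proof. unfold vF. rewrite (den_can tF (u0 Mc) (fun _ => tK)); reflexivity. Qed.

Lemma mapp_cls a b : ca_app (pm_alg Mc) (cls a) (cls b) = cls (App a b).
Proof. apply qapp_cls. Qed.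
Lemma mvs_cls t s : vs Mc (cls t) s <-> provS (sP s) t.
Proof. apply qvs_cls. Qed.
Lemma vXi_can : vXi Mc = cls tXi. Proof. reflexivity. Qed.
Lemma vL_can : vL Mc = cls tL. Proof. reflexivity. Qed.
Lemma vA_can tau : vA Mc tau = cls (@tA B Oth tau). Proof. reflexivity. Qed.

Lemma fresh_state (s : st) (ts : list term) : exists v,
  (forall t, sP s t -> ~ occurs v t) /\ (forall t, In t ts -> ~ occurs v t).
Proof.
  destruct (sH s) as [l Hl]. exists (2 * lbound (ts ++ l) + 1). split.
  - intros t Ht. apply Hl in Ht. destruct Ht as [[t0 [_ ->]]|Ht].
    + intros Ho. apply occurs_ren in Ho. destruct Ho as [n [_ E]]. unfold dbl in E. lia.
    + apply fresh_gen with (ts ++ l); [lia|]. apply in_or_app; auto.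
  - intros t Ht. apply fresh_gen with (ts ++ l); [lia|]. apply in_or_app; auto.
Qed.

Lemma ext_state (s : st) (a : term) : exists s', sle s s' /\ sP s' a /\ forall t, sP s' t -> sP s t \/ t = a.
Proof.
  destruct (sH s) as [l Hl].
  assert (H : exists l', forall t, (sP s t \/ t = a) <-> Gs t \/ In t l').
  { exists (a :: l). intros t. rewrite Hl. simpl. intuition. }
  exists (mkst _ H). unfold sle; simpl. split; [|split]; auto.
Qed.

Lemma split_ctx (P : term -> Prop) a G : (forall t, In t G -> P t \/ t = a) ->
  exists G0, (forall t, In t G0 -> P t) /\ incl G (a :: G0).
Proof.
  induction G as [|b G IH]; intros H.
  - exists nil. split; [simpl; tauto|intros x []].
  - destruct IH as [G0 [H1 H2]]; [intros; apply H; simpl; auto|].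
    destruct (H b (or_introl eq_refl)) as [Hb|Hb].
    + exists (b :: G0). split.
      * intros t [<-|Ht]; auto.
      * intros x [<-|Hx]; simpl; auto. apply H2 in Hx. destruct Hx; simpl; auto.
    + exists G0. split; auto. intros x [<-|Hx]; simpl; auto. apply H2; auto.
Qed.

Lemma provS_app (D : term -> Prop) (G1 G2 : list term) : (forall t, In t G1 -> D t) -> (forall t, In t G2 -> D t) ->
  forall t, In t (G1 ++ G2) -> D t.
Proof. intros H1 H2 t Ht. apply in_app_or in Ht. destruct Ht; auto. Qed.

Lemma Mc_model : is_model Mc om.
Proof.
  unfold is_model. rewrite vXi_can, vL_can, vH_can, vF_can.
  setoid_rewrite vA_can.
  split; [|split; [|split; [|split; [|split; [|split]]]]].
  - intros X Y s HX HI.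
    destruct (cls_surj X) as [x ->]. destruct (cls_surj Y) as [y ->].
    rewrite !mapp_cls in *. apply (proj1 (mvs_cls _ _)) in HX. apply (proj2 (mvs_cls _ _)).
    destruct HX as [G1 [HG1 D1]].
    destruct (fresh_state s (x :: y :: nil)) as [v [Hv1 Hv2]].
    destruct (ext_state s (App x (Var v))) as [s' [Hs1 [Hs2 Hs3]]].
    specialize (HI s' Hs1 (cls (Var v))). rewrite !mapp_cls, !mvs_cls in HI.
    destruct HI as [G2 [HG2 D2]].
    { exists (App x (Var v) :: nil). split; [intros t [<-|[]]; auto|]. apply d_ax; simpl; auto. }
    destruct (@split_ctx (sP s) (App x (Var v)) G2) as [G0 [HG0 Hi]].
    { intros; apply Hs3; auto. }
    exists (G0 ++ G1). split; [apply provS_app; auto|].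
    apply d_Xii with v.
    + intros t Ht; apply Hv1. apply (@provS_app (sP s) G0 G1 HG0 HG1); auto.
    + apply Hv2; simpl; auto.
    + apply Hv2; simpl; auto.
    + apply deriv_weak with G2; auto. intros z Hz. apply Hi in Hz.
      destruct Hz as [<-|Hz]; simpl; auto. right; apply in_or_app; auto.
    + apply deriv_weak with G1; auto. intros z Hz; apply in_or_app; auto.
  - intros X Y s HXY Z HZ.
    destruct (cls_surj X) as [x ->]. destruct (cls_surj Y) as [y ->].
    destruct (cls_surj Z) as [z ->].
    rewrite !mapp_cls, !mvs_cls in *.
    destruct HXY as [G1 [HG1 D1]]. destruct HZ as [G2 [HG2 D2]].
    exists (G1 ++ G2). split; [apply provS_app; auto|].
    apply d_Xie with x.
    + apply deriv_weak with G1; auto. intros w Hw; apply in_or_app; auto.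
    + apply deriv_weak with G2; auto. intros w Hw; apply in_or_app; auto.
  - intros X Y s HX HI.
    destruct (cls_surj X) as [x ->]. destruct (cls_surj Y) as [y ->].
    rewrite !mapp_cls in *. apply (proj1 (mvs_cls _ _)) in HX. apply (proj2 (mvs_cls _ _)).
    destruct HX as [G1 [HG1 D1]].
    destruct (fresh_state s (x :: y :: nil)) as [v [Hv1 Hv2]].
    destruct (ext_state s (App x (Var v))) as [s' [Hs1 [Hs2 Hs3]]].
    specialize (HI s' Hs1 (cls (Var v))). rewrite !mapp_cls, !mvs_cls in HI.
    destruct HI as [G2 [HG2 D2]].
    { exists (App x (Var v) :: nil). split; [intros t [<-|[]]; auto|]. apply d_ax; simpl; auto. }
    destruct (@split_ctx (sP s) (App x (Var v)) G2) as [G0 [HG0 Hi]].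
    { intros; apply Hs3; auto. }
    exists (G0 ++ G1). split; [apply provS_app; auto|].
    apply d_XiH with v.
    + intros t Ht; apply Hv1. apply (@provS_app (sP s) G0 G1 HG0 HG1); auto.
    + apply Hv2; simpl; auto.
    + apply Hv2; simpl; auto.
    + apply deriv_weak with G2; auto. intros z Hz. apply Hi in Hz.
      destruct Hz as [<-|Hz]; simpl; auto. right; apply in_or_app; auto.
    + apply deriv_weak with G1; auto. intros z Hz; apply in_or_app; auto.
  - intros Hom X Y s HX HI.
    destruct (cls_surj X) as [x ->]. destruct (cls_surj Y) as [y ->].
    rewrite !mapp_cls in *. apply (proj1 (mvs_cls _ _)) in HX. apply (proj2 (mvs_cls _ _)).
    destruct HX as [G1 [HG1 D1]].
    destruct (fresh_state s (x :: y :: nil)) as [v [Hv1 Hv2]].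
    destruct (ext_state s (App x (Var v))) as [s' [Hs1 [Hs2 Hs3]]].
    specialize (HI s' Hs1). rewrite !mvs_cls in HI.
    destruct HI as [G2 [HG2 D2]].
    { exists (cls (Var v)). rewrite mapp_cls, mvs_cls.
      exists (App x (Var v) :: nil). split; [intros t [<-|[]]; auto|]. apply d_ax; simpl; auto. }
    destruct (@split_ctx (sP s) (App x (Var v)) G2) as [G0 [HG0 Hi]].
    { intros; apply Hs3; auto. }
    exists (G0 ++ G1). split; [apply provS_app; auto|].
    apply d_FL with v; auto.
    + intros t Ht; apply Hv1. apply (@provS_app (sP s) G0 G1 HG0 HG1); auto.
    + apply Hv2; simpl; auto.
    + apply Hv2; simpl; auto.
    + apply deriv_weak with G2; auto. intros z Hz. apply Hi in Hz.
      destruct Hz as [<-|Hz]; simpl; auto. right; apply in_or_app; auto.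
    + apply deriv_weak with G1; auto. intros z Hz; apply in_or_app; auto.
  - intros X s HX. destruct (cls_surj X) as [x ->].
    rewrite !mapp_cls, !mvs_cls in *. destruct HX as [G [HG D]].
    exists G; split; auto. apply d_Hi; auto.
  - intros s. rewrite mapp_cls, mvs_cls. exists nil. split; [intros t []|]. apply d_LH.
  - intros s tau. rewrite mapp_cls, mvs_cls. exists nil. split; [intros t []|]. apply d_LA.
Qed.

End Can.


Lemma div2_dbl n : Nat.div2 (n + n) = n.
Proof. induction n; simpl; auto. rewrite Nat.add_succ_r. simpl. congruence. Qed.

Theorem mainTheorem5 (B Oth : Type) (HB : Finite B) (omega : bool)
  (Gamma : term B Oth -> Prop) (t : term B Oth) :
  sem_conseq omega Gamma t <-> prov omega Gamma t.
Proof.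
  split.
  - intros Hs.
    assert (H0 : exists l : list (term B Oth), forall t, Gs Gamma t <-> Gs Gamma t \/ In t l).
    { exists nil. simpl. tauto. }
    set (s0 := mkst _ H0).
    set (dg := fun n => @Var B Oth (n + n)).
    set (hg := fun n => @Var B Oth (Nat.div2 n)).
    assert (Hhd : forall x, sub hg (sub dg x) = x).
    { intros x. rewrite sub_sub. rewrite <- (sub_id x) at 2. apply sub_ext.
      intros n. unfold hg, dg. simpl. rewrite div2_dbl. reflexivity. }
    specialize (Hs (Mc omega Gamma) (Mc_model omega Gamma) s0
                 (fun n => cls (dg n))).
    unfold forces in Hs. rewrite (den_can _ _ dg) in Hs by reflexivity.
    assert (Hp : forall t' : term B Oth, Gamma t' ->
      vs (Mc omega Gamma) (den (Mc omega Gamma) t' (fun n : nat => cls (dg n))) s0).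
    + intros t' Ht'. rewrite (den_can _ _ dg) by reflexivity.
      apply (proj2 (mvs_cls _ _)). exists (sub dg t' :: nil). split.
      * intros z [<-|[]]. simpl. exists t'. split; auto. rewrite ren_as_sub. reflexivity.
      * apply d_ax. simpl; auto.
    + destruct (proj1 (mvs_cls _ _) (Hs Hp)) as [G [HG D]].
      exists (map (sub hg) G). split.
      * intros z Hz. apply in_map_iff in Hz. destruct Hz as [g [<- Hg]].
        apply HG in Hg. simpl in Hg. destruct Hg as [t0 [Ht0 ->]].
        rewrite ren_as_sub. fold dg. unfold dbl in *. rewrite Hhd. auto.
      * rewrite <- (Hhd t). apply (deriv_sub D). intros; apply in_map; auto.
  - intros [G [HG D]] M HM s u Hu. apply (soundness D HM). intros; apply Hu, HG; auto.
Qed.
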